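(* Let $C$ be a smooth non-hyperelliptic genus $4$ curve, let $S$ be the associated K3 surface with order-$3$ deck transformation $\sigma$, and let $M,N\subset H^2(S,\mathbb{Z})$ and $\eta$ be as below. Then for every automorphism $\zeta$ of the lattice $N$, exactly one of $\zeta,-\zeta$ is the restriction of an automorphism of $H^2(S,\mathbb{Z})$ that fixes $\eta$.
   Context: $C$ is canonically embedded in $\mathbb{P}^3$ as $Q\cap K$, where $Q$ is a quadric (smooth or with one node) and $K$ a cubic surface. $S$ is the K3 surface that is the triple cyclic cover of $Q$ (of its minimal resolution if $Q$ is singular) branched along $C$, and $\sigma$ is a generator of the deck group. $M=H^2(S,\mathbb{Z})^{\sigma^*}$ is isometric to $U(3)$, where $U$ is the hyperbolic plane with basis $x_1,x_2$, $x_i^2=0$, $x_1x_2=1$, and $U(3)$ means the form scaled by $3$. $\eta\in M$ is the class corresponding to $x_1+x_2$, the pullback of the hyperplane class of $Q$. $N=M^\perp$ has rank $20$. Lattice automorphisms are isometries. *)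

(* Defs.v *)
(* The K3 lattice H^2(S,Z) is modelled concretely as
   row vectors 'rV[int]_22 with the Gram matrix of U^3 + E8(-1)^2. *)
From HB Require Import structures.
From mathcomp Require Import all_boot all_order all_algebra.
Set Implicit Arguments. Unset Strict Implicit. Unset Printing Implicit Defensive.
Import Order.TTheory GRing.Theory Num.Theory.
Local Open Scope ring_scope.

Definition e8adj (a b : nat) : bool :=
  ((a.+1 == b) && (b <= 6)%N) || ((b.+1 == a) && (a <= 6)%N)
  || ((a == 4%N) && (b == 7%N)) || ((a == 7%N) && (b == 4%N)).

Definition e8m (a b : nat) : int :=
  if a == b then -2 else if e8adj a b then 1 else 0.

(* Gram entries of the K3 lattice U + U + U + E8(-1) + E8(-1):
   indices 0..5 are three hyperbolic planes {0,1},{2,3},{4,5};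
   indices 6..13 and 14..21 are two copies of E8(-1). *)
Definition k3entry (i j : nat) : int :=
  if (i < 6)%N then
    (if [&& (j < 6)%N, i./2 == j./2 & i != j] then 1 else 0)
  else if (j < 6)%N then 0
  else if ((i - 6) %/ 8 == (j - 6) %/ 8)%N then e8m ((i - 6) %% 8) ((j - 6) %% 8)
  else 0.

Definition k3gram : 'M[int]_22 := \matrix_(i < 22, j < 22) k3entry i j.

Definition k3form (x y : 'rV[int]_22) : int := (x *m k3gram *m y^T) 0 0.

Definition inSpan2 (e1 e2 v : 'rV[int]_22) : Prop :=
  exists a b : int, v = a *: e1 + b *: e2.

Definition inPerp2 (e1 e2 v : 'rV[int]_22) : Prop :=
  k3form v e1 = 0 /\ k3form v e2 = 0.

(* zeta is an automorphism (bijective additive isometry) of the lattice N;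
   values of zeta outside N are irrelevant. *)
Definition is_lattice_aut (N : 'rV[int]_22 -> Prop)
    (zeta : 'rV[int]_22 -> 'rV[int]_22) : Prop :=
  [/\ (forall v, N v -> N (zeta v)),
      (forall u v, N u -> N v -> zeta (u + v) = zeta u + zeta v),
      (forall u v, N u -> N v -> k3form (zeta u) (zeta v) = k3form u v),
      (forall u v, N u -> N v -> zeta u = zeta v -> u = v)
    & (forall w, N w -> exists2 v, N v & zeta v = w)].

Definition is_k3_aut (A : 'M[int]_22) : Prop :=
  A \in unitmx /\ forall x y, k3form (x *m A) (y *m A) = k3form x y.

Definition extends_fixing (N : 'rV[int]_22 -> Prop) (eta : 'rV[int]_22)
    (zeta : 'rV[int]_22 -> 'rV[int]_22) : Prop :=
  exists A : 'M[int]_22,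
    [/\ is_k3_aut A, eta *m A = eta & forall v, N v -> v *m A = zeta v].

(* Main.v *)
Require Import Defs.
From HB Require Import structures.
From mathcomp Require Import all_boot all_order all_algebra.
From mathcomp Require Import ring lra zify.
From Stdlib Require Import Classical.
Import Order.TTheory GRing.Theory Num.Theory.
Local Open Scope ring_scope.

Definition cinv : seq (seq int) :=
 [:: [:: 2; 3; 4; 5; 6; 4; 2; 3]; [:: 3; 6; 8; 10; 12; 8; 4; 6]; [:: 4; 8; 12; 15; 18; 12; 6; 9]; [:: 5; 10; 15; 20; 24; 16; 8; 12]; [:: 6; 12; 18; 24; 30; 20; 10; 15]; [:: 4; 8; 12; 16; 20; 14; 7; 10]; [:: 2; 4; 6; 8; 10; 7; 4; 5]; [:: 3; 6; 9; 12; 15; 10; 5; 8]]%R.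

Definition hentry (i j : nat) : int :=
  if (i < 6)%N then k3entry i j
  else if (j < 6)%N then 0
  else if ((i - 6) %/ 8 == (j - 6) %/ 8)%N then - nth 0 (nth [::] cinv ((i - 6) %% 8)) ((j - 6) %% 8)
  else 0.

Definition k3inv : 'M[int]_22 := \matrix_(i < 22, j < 22) hentry i j.

Definition sumlist (f : nat -> int) := foldr (fun k s => f k + s) 0 (iota 0 22).

Lemma check_inv : all (fun i => all (fun j => sumlist (fun k => k3entry i k * hentry k j) == (i == j)%:R) (iota 0 22)) (iota 0 22).
Proof. vm_compute. reflexivity. Qed.

Lemma check_sym : all (fun i => all (fun j => k3entry i j == k3entry j i) (iota 0 22)) (iota 0 22).
Proof. vm_compute. reflexivity. Qed.

Lemma sum_ord22 (F : nat -> int) : \sum_(k < 22) F k = sumlist F.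
Proof.
rewrite -(big_mkord xpredT F) /sumlist /index_iota subn0.
elim: (iota 0 22) => [|x s IH]; first by rewrite big_nil.
by rewrite big_cons IH.
Qed.

Lemma k3inv_ok : k3gram *m k3inv = 1%:M.
Proof.
apply/matrixP => i j; rewrite !mxE.
have -> : \sum_j0 k3gram i j0 * k3inv j0 j = \sum_(k < 22) k3entry i k * hentry k j.
  by apply: eq_bigr => k _; rewrite !mxE.
rewrite (sum_ord22 (fun k => k3entry i k * hentry k j)).
have hi : (i : nat) \in iota 0 22 by rewrite mem_iota /= ltn_ord.
have hj : (j : nat) \in iota 0 22 by rewrite mem_iota /= ltn_ord.
by rewrite (eqP (allP (allP check_inv _ hi) _ hj)).
Qed.

Lemma k3gram_sym : k3gram^T = k3gram.
Proof.
apply/matrixP => i j; rewrite !mxE.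
have hi : (i : nat) \in iota 0 22 by rewrite mem_iota /= ltn_ord.
have hj : (j : nat) \in iota 0 22 by rewrite mem_iota /= ltn_ord.
by rewrite (eqP (allP (allP check_sym _ hj) _ hi)).
Qed.

Notation f := k3form.

Lemma fDl x y z : f (x + y) z = f x z + f y z.
Proof. by rewrite /k3form !mulmxDl mxE. Qed.
Lemma fZl (c : int) x z : f (c *: x) z = c * f x z.
Proof. by rewrite /k3form -!scalemxAl mxE. Qed.
Lemma fNl x z : f (- x) z = - f x z.
Proof. by rewrite -scaleN1r fZl mulN1r. Qed.
Lemma fBl x y z : f (x - y) z = f x z - f y z.
Proof. by rewrite fDl fNl. Qed.
Lemma fC x y : f x y = f y x.
Proof.
have h : (x *m k3gram *m y^T)^T = y *m k3gram *m x^T.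
  by rewrite !trmx_mul trmxK k3gram_sym mulmxA.
by rewrite /k3form -h [RHS]mxE.
Qed.
Lemma fDr x y z : f z (x + y) = f z x + f z y.
Proof. by rewrite fC fDl fC (fC y). Qed.
Lemma fZr (c : int) x z : f z (c *: x) = c * f z x.
Proof. by rewrite fC fZl fC. Qed.
Lemma fNr x z : f z (- x) = - f z x.
Proof. by rewrite fC fNl fC. Qed.
Lemma fBr x y z : f z (x - y) = f z x - f z y.
Proof. by rewrite fDr fNr. Qed.
Lemma f0l z : f 0 z = 0.
Proof. by rewrite -(scale0r 0) fZl mul0r. Qed.
Lemma f0r z : f z 0 = 0.
Proof. by rewrite fC f0l. Qed.

Lemma f_delta x j : f x (delta_mx 0 j) = (x *m k3gram) 0 j.
Proof. by rewrite /k3form trmx_delta -colE mxE. Qed.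

Lemma nondeg0 x : (forall y, f x y = 0) -> x = 0.
Proof.
move=> h.
have hx : x *m k3gram = 0.
  apply/matrixP => i j; rewrite (ord1 i) -f_delta h mxE //.
by rewrite -[x]mulmx1 -k3inv_ok mulmxA hx mul0mx.
Qed.

Lemma nondeg3 x : (forall y, (3 %| f x y)%Z) -> exists w, x = 3 *: w.
Proof.
move=> h.
pose w := \row_j divz ((x *m k3gram) 0 j) 3.
have hx : x *m k3gram = 3 *: w.
  apply/matrixP => i j; rewrite (ord1 i) [RHS]mxE [w 0 j]mxE mulrC divzK // -f_delta; exact: h.
exists (w *m k3inv).
by rewrite -[x]mulmx1 -k3inv_ok mulmxA hx scalemxAl.
Qed.

Lemma scale3I (x y : 'rV[int]_22) : 3 *: x = 3 *: y -> x = y.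
Proof.
move=> h; apply/matrixP => i j.
have := congr1 (fun M : 'rV[int]_22 => M i j) h; rewrite /= !mxE => /eqP.
by move/eqP; apply: mulfI.
Qed.

Lemma k3gram_unit : \det k3gram \is a GRing.unit.
Proof. by rewrite -unitmxE; case: (mulmx1_unit k3inv_ok). Qed.

Lemma f_delta2 (M : 'M[int]_22) (i j : 'I_22) : ((delta_mx (0 : 'I_1) i) *m M *m (delta_mx (0 : 'I_1) j)^T) 0 0 = M i j.
Proof. by rewrite trmx_delta -colE mxE -rowE mxE. Qed.



Lemma perp0 e1 e2 : inPerp2 e1 e2 0.
Proof. by split; rewrite f0l. Qed.
Lemma perpD e1 e2 u v : inPerp2 e1 e2 u -> inPerp2 e1 e2 v -> inPerp2 e1 e2 (u + v).
Proof. by move=> [h1 h2] [h3 h4]; split; rewrite fDl ?h1 ?h2 ?h3 ?h4 addr0. Qed.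
Lemma perpZ e1 e2 (c : int) u : inPerp2 e1 e2 u -> inPerp2 e1 e2 (c *: u).
Proof. by move=> [h1 h2]; split; rewrite fZl ?h1 ?h2 mulr0. Qed.
Lemma perpN e1 e2 u : inPerp2 e1 e2 u -> inPerp2 e1 e2 (- u).
Proof. by move=> [h1 h2]; split; rewrite fNl ?h1 ?h2 oppr0. Qed.
Lemma perpB e1 e2 u v : inPerp2 e1 e2 u -> inPerp2 e1 e2 v -> inPerp2 e1 e2 (u - v).
Proof. by move=> hu hv; apply: perpD => //; apply: perpN. Qed.
Lemma perpMn e1 e2 u n : inPerp2 e1 e2 u -> inPerp2 e1 e2 (u *+ n).
Proof. by move=> hu; elim: n => [|n IH]; [rewrite mulr0n; apply: perp0|rewrite mulrS; apply: perpD]. Qed.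

Lemma aut_lin e1 e2 g : is_lattice_aut (inPerp2 e1 e2) g ->
  [/\ g 0 = 0, forall u, inPerp2 e1 e2 u -> g (- u) = - g u
   & forall (c : int) u, inPerp2 e1 e2 u -> g (c *: u) = c *: g u].
Proof.
case=> gN gD _ _ _.
have g0 : g 0 = 0.
  have h := gD 0 0 (perp0 _ _) (perp0 _ _); rewrite addr0 in h.
  by apply: (addrI (g 0)); rewrite addr0 -h.
have gNeg u : inPerp2 e1 e2 u -> g (- u) = - g u.
  move=> hu; apply/eqP; rewrite -subr_eq0 opprK.
  rewrite -gD ?addNr ?g0 //; exact: perpN.
have gMn u n : inPerp2 e1 e2 u -> g (u *+ n) = g u *+ n.
  move=> hu; elim: n => [|n IH]; first by rewrite !mulr0n.
  by rewrite !mulrS gD ?IH //; apply: perpMn.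
split=> // c u hu; rewrite -[c]intz !scaler_int.
case: c => n /=; first exact: gMn.
by rewrite !NegzE !mulrNz gNeg ?gMn //; apply: perpMn.
Qed.

Definition mm e1 e2 v : 'rV[int]_22 := f v e2 *: e1 + f v e1 *: e2.
Definition ms e1 e2 v : 'rV[int]_22 := f v e1 *: e1 + f v e2 *: e2.
Definition nn e1 e2 v : 'rV[int]_22 := 3 *: v - mm e1 e2 v.

Lemma mmD e1 e2 x y : mm e1 e2 (x + y) = mm e1 e2 x + mm e1 e2 y.
Proof. rewrite /mm !fDl !scalerDl; rewrite addrACA //. Qed.
Lemma mmZ e1 e2 (c : int) x : mm e1 e2 (c *: x) = c *: mm e1 e2 x.
Proof. by rewrite /mm !fZl scalerDr !scalerA. Qed.
Lemma msD e1 e2 x y : ms e1 e2 (x + y) = ms e1 e2 x + ms e1 e2 y.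
Proof. rewrite /ms !fDl !scalerDl; rewrite addrACA //. Qed.
Lemma msZ e1 e2 (c : int) x : ms e1 e2 (c *: x) = c *: ms e1 e2 x.
Proof. by rewrite /ms !fZl scalerDr !scalerA. Qed.
Lemma nnD e1 e2 x y : nn e1 e2 (x + y) = nn e1 e2 x + nn e1 e2 y.
Proof. by rewrite /nn mmD scalerDr opprD addrACA. Qed.
Lemma nnZ e1 e2 (c : int) x : nn e1 e2 (c *: x) = c *: nn e1 e2 x.
Proof. by rewrite /nn mmZ scalerBr !scalerA mulrC. Qed.
Lemma nnB e1 e2 x y : nn e1 e2 (x - y) = nn e1 e2 x - nn e1 e2 y.
Proof. by rewrite -scaleN1r nnD nnZ scaleN1r. Qed.
Lemma decomp e1 e2 v : 3 *: v = mm e1 e2 v + nn e1 e2 v.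
Proof. by rewrite /nn addrC subrK. Qed.

Lemma f_span e1 e2 (h11 : f e1 e1 = 0) (h22 : f e2 e2 = 0) (h12 : f e1 e2 = 3)
  (a b c d : int) : f (a *: e1 + b *: e2) (c *: e1 + d *: e2) = 3 * (a * d + b * c).
Proof.
rewrite !fDl !fDr !fZl !fZr h11 h22 h12 (fC e2 e1) h12; ring.
Qed.
Lemma f_span_e1 e1 e2 (h11 : f e1 e1 = 0) (h22 : f e2 e2 = 0) (h12 : f e1 e2 = 3)
  (a b : int) : f (a *: e1 + b *: e2) e1 = 3 * b.
Proof. by rewrite !fDl !fZl h11 (fC e2 e1) h12 mulr0 add0r mulrC. Qed.
Lemma f_span_e2 e1 e2 (h11 : f e1 e1 = 0) (h22 : f e2 e2 = 0) (h12 : f e1 e2 = 3)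
  (a b : int) : f (a *: e1 + b *: e2) e2 = 3 * a.
Proof. by rewrite !fDl !fZl h22 h12 mulr0 addr0 mulrC. Qed.

Lemma f_span_perp e1 e2 (a b : int) n : inPerp2 e1 e2 n -> f (a *: e1 + b *: e2) n = 0.
Proof. by case=> h1 h2; rewrite fDl !fZl (fC e1) (fC e2) h1 h2 !mulr0 addr0. Qed.

Lemma nn_perp e1 e2 (h11 : f e1 e1 = 0) (h22 : f e2 e2 = 0) (h12 : f e1 e2 = 3) v :
  inPerp2 e1 e2 (nn e1 e2 v).
Proof.
by split; rewrite /nn fBl fZl /mm ?f_span_e1 ?f_span_e2 // mulrC subrr.
Qed.

Lemma f_orth_sum a b c d : f a d = 0 -> f b c = 0 -> f (a + b) (c + d) = f a c + f b d.
Proof. by move=> h1 h2; rewrite fDl !fDr h1 h2 addr0 add0r. Qed.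

Lemma mm_perp e1 e2 x n : inPerp2 e1 e2 n -> f (mm e1 e2 x) n = 0.
Proof. exact: f_span_perp. Qed.

Lemma f3 e1 e2 (h11 : f e1 e1 = 0) (h22 : f e2 e2 = 0) (h12 : f e1 e2 = 3) x y :
  f (3 *: x) (3 *: y) = f (mm e1 e2 x) (mm e1 e2 y) + f (nn e1 e2 x) (nn e1 e2 y).
Proof.
rewrite (decomp e1 e2 x) (decomp e1 e2 y) f_orth_sum //.
  by apply: mm_perp; apply: nn_perp.
by rewrite fC; apply: mm_perp; apply: nn_perp.
Qed.

Lemma perp_div3 e1 e2 x : inPerp2 e1 e2 (3 *: x) -> inPerp2 e1 e2 x.
Proof.
by case; rewrite !fZl => /eqP h1 /eqP h2; split; apply/eqP; move: h1 h2; rewrite !mulf_eq0.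
Qed.

Lemma extend e1 e2 (h11 : f e1 e1 = 0) (h22 : f e2 e2 = 0) (h12 : f e1 e2 = 3)
  g (hg : is_lattice_aut (inPerp2 e1 e2) g) (sw : bool)
  (hdiv : forall v, exists w,
     (if sw then ms e1 e2 v else mm e1 e2 v) + g (nn e1 e2 v) = 3 *: w) :
  extends_fixing (inPerp2 e1 e2) (e1 + e2) g.
Proof.
have [g0 gNeg gZ] := aut_lin _ _ _ hg.
case: hg => gN gD giso _ _.
pose S := fun v => if sw then ms e1 e2 v else mm e1 e2 v.
have SD x y : S (x + y) = S x + S y by rewrite /S; case: (sw); rewrite ?msD ?mmD.
have SZ (c : int) x : S (c *: x) = c *: S x by rewrite /S; case: (sw); rewrite ?msZ ?mmZ.
have Sspan x : exists a b : int, S x = a *: e1 + b *: e2.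
  by rewrite /S; case: (sw); rewrite /ms /mm; do 2 eexists.
have Sform x y : f (S x) (S y) = f (mm e1 e2 x) (mm e1 e2 y).
  rewrite /S; case: (sw) => //; rewrite /ms /mm !f_span //; ring.
pose hv := fun v => S v + g (nn e1 e2 v).
have hvD x y : hv (x + y) = hv x + hv y.
  rewrite /hv SD nnD gD; [by rewrite addrACA| |]; exact: nn_perp.
have hvZ (c : int) x : hv (c *: x) = c *: hv x.
  by rewrite /hv SZ nnZ gZ ?scalerDr //; apply: nn_perp.
pose gv v : 'rV[int]_22 := \row_j divz (hv v 0 j) 3.
have hgv v : 3 *: gv v = hv v.
  have [w hw] := hdiv v.
  apply/matrixP => i j; rewrite (ord1 i) mxE [gv v 0 j]mxE.
  change (hv v) with (S v + g (nn e1 e2 v)).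
  by rewrite hw [(3 *: w) 0 j]mxE mulKz.
have gvD x y : gv (x + y) = gv x + gv y.
  by apply: scale3I; rewrite scalerDr !hgv hvD.
have gvZ (c : int) x : gv (c *: x) = c *: gv x.
  by apply: scale3I; rewrite scalerA mulrC -scalerA !hgv hvZ.
have gv0 : gv 0 = 0.
  by have := gvZ 0 0; rewrite !scale0r.
pose A : 'M[int]_22 := \matrix_(i, j) gv (delta_mx 0 i) 0 j.
have hA x : x *m A = gv x.
  rewrite mulmx_sum_row {2}(row_sum_delta x).
  rewrite (big_morph gv gvD gv0); apply: eq_bigr => i _.
  rewrite gvZ; congr (_ *: _); apply/rowP => j; rewrite !mxE //.
have hiso x y : f (gv x) (gv y) = f x y.
  apply: (@mulfI _ 9) => //.
  have -> : 9 * f (gv x) (gv y) = f (3 *: gv x) (3 *: gv y).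
    by rewrite fZl fZr mulrA.
  have -> : 9 * f x y = f (3 *: x) (3 *: y) by rewrite fZl fZr mulrA.
  have Sperp u n : inPerp2 e1 e2 n -> f (S u) n = 0.
    by move=> hn; have [a [b ->]] := Sspan u; apply: f_span_perp.
  have nnp u : inPerp2 e1 e2 (nn e1 e2 u) by apply: nn_perp.
  rewrite !hgv (f3 e1 e2 h11 h22 h12) /hv f_orth_sum; first by rewrite Sform giso.
    by apply: Sperp; apply: gN.
  by rewrite fC; apply: Sperp; apply: gN.
exists A; split; [split| |].
- have e i j : (A *m k3gram *m A^T) i j = f (delta_mx 0 i *m A) (delta_mx 0 j *m A).
    by rewrite -f_delta2 /k3form trmx_mul !mulmxA.
  have hG : A *m k3gram *m A^T = k3gram.
    by apply/matrixP => i j; rewrite e !hA hiso /k3form f_delta2.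
  have := congr1 determinant hG; rewrite !det_mulmx det_tr => hd.
  have nz : \det k3gram != 0.
    by apply: contraTneq k3gram_unit => ->; rewrite unitr0.
  rewrite unitmxE; apply/unitrPr; exists (\det A).
  apply: (mulIf nz); rewrite mul1r -[in RHS]hd; ring.
- by move=> x y; rewrite !hA hiso.
- have fe1 : f (e1 + e2) e1 = 3 by rewrite fDl h11 (fC e2) h12 add0r.
  have fe2 : f (e1 + e2) e2 = 3 by rewrite fDl h22 h12 addr0.
  have Se : S (e1 + e2) = 3 *: (e1 + e2).
    by rewrite /S /ms /mm fe1 fe2 scalerDr; case: (sw).
  have ne : nn e1 e2 (e1 + e2) = 0 by rewrite /nn /mm fe1 fe2 -scalerDr subrr.
  by rewrite hA; apply: scale3I; rewrite hgv /hv Se ne g0 addr0.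
- move=> v hv'; rewrite hA; apply: scale3I; rewrite hgv /hv.
  have [h1 h2] := hv'.
  have -> : S v = 0 by rewrite /S /ms /mm h1 h2 !scale0r addr0; case: (sw).
  have -> : nn e1 e2 v = 3 *: v by rewrite /nn /mm h1 h2 !scale0r addr0 subr0.
  by rewrite gZ // add0r.
Qed.

Definition r3 (z : int) : 'F_3 := z%:~R.
Lemma r3_eq0 z : (3 %| z)%Z = (r3 z == 0).
Proof. exact: (dvdz_pcharf (pchar_Fp (isT : prime 3))). Qed.
Lemma r3D x y : r3 (x + y) = r3 x + r3 y. Proof. exact: intrD. Qed.
Lemma r3M x y : r3 (x * y) = r3 x * r3 y. Proof. exact: intrM. Qed.
Lemma r3N x : r3 (- x) = - r3 x. Proof. exact: intrN. Qed.
Lemma r3B x y : r3 (x - y) = r3 x - r3 y. Proof. by rewrite r3D r3N. Qed.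
Lemma r3_3 : r3 3 = 0. Proof. by apply/eqP; rewrite -r3_eq0. Qed.
Lemma r3_3M x : r3 (3 * x) = 0. Proof. by rewrite r3M r3_3 mul0r. Qed.
Lemma r3_1 : r3 1 = 1. Proof. by []. Qed.
Lemma r3_0 : r3 0 = 0. Proof. by []. Qed.
Lemma r3_dvd z : r3 z = 0 -> exists k, z = 3 * k.
Proof. move/eqP; rewrite -r3_eq0 => h; exists (z %/ 3)%Z; by rewrite mulrC divzK. Qed.

Definition s3 : seq 'F_3 := [:: 0; 1; -1].
Lemma F3_cases (x : 'F_3) : [\/ x = 0, x = 1 | x = -1].
Proof. by case: x => -[|[|[|//]]] ? ; [apply Or31|apply Or32|apply Or33]; apply/val_inj. Qed.
Lemma F3_mem (x : 'F_3) : x \in s3.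
Proof. by case: (F3_cases x) => ->. Qed.
Lemma F3_classify_b : all (fun P : 'F_3 => all (fun Q : 'F_3 => all (fun R : 'F_3 => all (fun T : 'F_3 =>
  (R * P + P * R == 0) ==> (T * Q + Q * T == 0) ==> (T * P + Q * R == 1) ==>
  (((Q == 0) && (R == 0) && (T == P) && (P * P == 1)) || ((P == 0) && (T == 0) && (Q == R) && (R * R == 1)))) s3) s3) s3) s3.
Proof. vm_compute. reflexivity. Qed.
Lemma F3_classify (P Q R T : 'F_3) : R * P + P * R = 0 -> T * Q + Q * T = 0 -> T * P + Q * R = 1 ->
  (Q = 0 /\ R = 0 /\ T = P /\ P * P = 1) \/ (P = 0 /\ T = 0 /\ Q = R /\ R * R = 1).
Proof.
move=> h1 h2 h3.
have := allP (allP (allP (allP F3_classify_b P (F3_mem P)) Q (F3_mem Q)) R (F3_mem R)) T (F3_mem T).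
rewrite h1 h2 h3 !eqxx /=.
by case/orP => /andP [/andP [/andP [/eqP -> /eqP ->] /eqP ->] /eqP ->]; [left|right].
Qed.
Lemma F3_sq (x : 'F_3) : x != 0 -> x * x = 1.
Proof. by case: (F3_cases x) => ->; rewrite ?eqxx // => _; rewrite ?mulrNN mulr1. Qed.
Lemma F3_2 : (2 : 'F_3) != 0. Proof. by []. Qed.
Lemma F3_1 : (1 : 'F_3) != 0. Proof. by []. Qed.

Definition good (e1 e2 : 'rV[int]_22) :=
  [/\ f e1 e1 = 0, f e2 e2 = 0, f e1 e2 = 3 &
      forall (k : int) v, k != 0 -> inSpan2 e1 e2 (k *: v) -> inSpan2 e1 e2 v].

Lemma nn_orth e1 e2 (h11 : f e1 e1 = 0) (h22 : f e2 e2 = 0) (h12 : f e1 e2 = 3) x n :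
  inPerp2 e1 e2 n -> f (nn e1 e2 x) n = 3 * f x n.
Proof. by move=> hn; rewrite /nn fBl fZl mm_perp // subr0. Qed.

Lemma perp_span e1 e2 (hg : good e1 e2) x :
  (forall n, inPerp2 e1 e2 n -> f x n = 0) -> inSpan2 e1 e2 x.
Proof.
case: hg => h11 h22 h12 hprim hx.
have hn : nn e1 e2 x = 0.
  apply: nondeg0 => y; apply: (@mulfI _ 3) => //.
  rewrite mulr0 -fZr (decomp e1 e2) fDr (fC _ (mm _ _ _)) mm_perp; last exact: nn_perp.
  by rewrite add0r nn_orth ?hx ?mulr0 //; apply: nn_perp.
apply: (hprim 3) => //; exists (f x e2), (f x e1).
by rewrite (decomp e1 e2) hn addr0.
Qed.

Lemma span_div e1 e2 (hg : good e1 e2) (c d : int) w :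
  3 *: w = c *: e1 + d *: e2 -> (3 %| c)%Z /\ (3 %| d)%Z.
Proof.
case: hg => h11 h22 h12 hprim hw.
have [al [be hab]] : inSpan2 e1 e2 w by apply: (hprim 3) => //; exists c, d.
have E1 := congr1 (fun z => f z e1) hw; have E2 := congr1 (fun z => f z e2) hw.
rewrite /= fZl hab !f_span_e1 // in E1; rewrite /= fZl hab !f_span_e2 // in E2.
split; apply/dvdzP.
- by exists al; lia.
- by exists be; lia.
Qed.

Lemma nontriv e1 e2 (hg : good e1 e2) (al be : int) :
  r3 al != 0 \/ r3 be != 0 -> exists v, r3 (al * f v e1 + be * f v e2) != 0.
Proof.
move=> hne.
case: (classic (exists v, r3 (al * f v e1 + be * f v e2) != 0)) => // hno.
exfalso.
have hall v : r3 (al * f v e1 + be * f v e2) = 0.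
  by apply/eqP; apply/negPn/negP => h; apply: hno; exists v.
have [w hw] : exists w, al *: e1 + be *: e2 = 3 *: w.
  apply: nondeg3 => y.
  by rewrite r3_eq0 fDl !fZl (fC e1) (fC e2); apply/eqP; apply: hall.
have [d1 d2] := span_div _ _ hg _ _ _ (esym hw).
by rewrite !r3_eq0 in d1 d2; case: hne => /negP.
Qed.

Lemma surj12 e1 e2 (hg : good e1 e2) : exists v1 v2,
  [/\ r3 (f v1 e1) = 1, r3 (f v1 e2) = 0, r3 (f v2 e1) = 0 & r3 (f v2 e2) = 1].
Proof.
have [w hw] := nontriv _ _ hg 1 0 (or_introl F3_1).
rewrite mul1r mul0r addr0 in hw.
have [v hv] := nontriv _ _ hg (- f w e2) (f w e1) (or_intror hw).
pose D := - f w e2 * f v e1 + f w e1 * f v e2.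
have hD : r3 D * r3 D = 1 by apply: F3_sq.
have eD : r3 D = - (r3 (f w e2) * r3 (f v e1)) + r3 (f w e1) * r3 (f v e2).
  by rewrite /D r3D !r3M r3N; ring.
exists (D *: (f v e2 *: w - f w e2 *: v)), (D *: (f w e1 *: v - f v e1 *: w)).
split; rewrite !fZl !fBl !fZl !r3M !r3B !r3M.
- by rewrite -hD {2}eD; ring.
- by ring.
- by ring.
- by rewrite -hD {2}eD; ring.
Qed.

Lemma aut_M e1 e2 (hg : good e1 e2) g
  (gsurj : forall w, inPerp2 e1 e2 w -> exists2 v, inPerp2 e1 e2 v & g v = w)
  (A : 'M[int]_22) (hA : is_k3_aut A) (heta : (e1 + e2) *m A = e1 + e2)
  (hr : forall v, inPerp2 e1 e2 v -> v *m A = g v) :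
  (e1 *m A = e1 /\ e2 *m A = e2) \/ (e1 *m A = e2 /\ e2 *m A = e1).
Proof.
have [_ iso] := hA.
have hg' := hg; case: hg' => h11 h22 h12 _.
have e2A : e2 *m A = e1 + e2 - e1 *m A by rewrite -heta mulmxDl addrAC subrr add0r.
have [x [y hxy]] : inSpan2 e1 e2 (e1 *m A).
  apply: perp_span => // n hn; have [v hv <-] := gsurj n hn.
  by rewrite -hr // iso fC; case: hv.
have q1 : f (e1 *m A) (e1 *m A) = 0 by rewrite iso h11.
have q2 : f (e1 *m A) (e1 + e2) = 3 by rewrite -heta iso fDr h11 h12 add0r.
rewrite hxy (f_span e1 e2 h11 h22 h12) in q1.
rewrite hxy fDr (f_span_e1 e1 e2 h11 h22 h12) (f_span_e2 e1 e2 h11 h22 h12) in q2.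
have [[hx hy]|[hx hy]] : (x = 1 /\ y = 0) \/ (x = 0 /\ y = 1).
  have : (x == 0) || (y == 0) by rewrite -mulf_eq0; apply/eqP; lia.
  case/orP => /eqP h; subst; lia.
- left; rewrite e2A hxy hx hy scale1r scale0r addr0; split=> //.
  by rewrite addrC addKr.
- right; rewrite e2A hxy hx hy scale1r scale0r add0r; split=> //.
  by rewrite addrK.
Qed.

Lemma nn_red e1 e2 r c1 c2 : f r e1 = 3 * c1 -> f r e2 = 3 * c2 ->
  nn e1 e2 r = 3 *: (r - (c2 *: e1 + c1 *: e2)).
Proof. by move=> h1 h2; rewrite /nn /mm h1 h2 scalerBr scalerDr !scalerA. Qed.

Lemma neg_aut e1 e2 zeta : is_lattice_aut (inPerp2 e1 e2) zeta ->
  is_lattice_aut (inPerp2 e1 e2) (fun v => - zeta v).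
Proof.
move=> hz; have [z0 zNeg zZ] := aut_lin _ _ _ hz.
case: hz => zN zD ziso zinj zsurj; split.
- by move=> v hv; apply: perpN; apply: zN.
- by move=> u v hu hv; rewrite zD // opprD.
- by move=> u v hu hv; rewrite fNl fNr opprK ziso.
- by move=> u v hu hv /oppr_inj; apply: zinj.
- move=> w hw; have [v hv hzv] := zsurj (- w) (perpN _ _ _ hw).
  by exists v => //; rewrite hzv opprK.
Qed.

Lemma nn_f e1 e2 w v : f (nn e1 e2 w) v = 3 * f w v - (f w e2 * f e1 v + f w e1 * f e2 v).
Proof. by rewrite /nn fBl fZl /mm fDl !fZl. Qed.

Lemma exists_ext e1 e2 (hg : good e1 e2) zeta
  (hz : is_lattice_aut (inPerp2 e1 e2) zeta) :
  extends_fixing (inPerp2 e1 e2) (e1 + e2) zeta \/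
  extends_fixing (inPerp2 e1 e2) (e1 + e2) (fun v => - zeta v).
Proof.
have hg' := hg; case: hg' => h11 h22 h12 hprim.
have [z0 zNeg zZ] := aut_lin _ _ _ hz.
have hz' := hz; case: hz' => zN zD ziso zinj zsurj.
have [v1 [v2 [a1 b1 a2 b2]]] := surj12 _ _ hg.
have nnp v : inPerp2 e1 e2 (nn e1 e2 v) by apply: nn_perp.
have zB x c y0 : inPerp2 e1 e2 x -> inPerp2 e1 e2 y0 -> zeta (x - c *: y0) = zeta x - c *: zeta y0.
  move=> hx hy; have hcy : inPerp2 e1 e2 (c *: y0) by apply: perpZ.
  rewrite zD //; last by apply: perpN.
  by rewrite zNeg // zZ.
(* reduction of a vector modulo M+N *)
have red y : exists2 n', inPerp2 e1 e2 n' &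
    nn e1 e2 (y - f y e1 *: v1 - f y e2 *: v2) = 3 *: n'.
  pose r := y - f y e1 *: v1 - f y e2 *: v2.
  have ar : r3 (f r e1) = 0 by rewrite /r !fBl !fZl !r3B !r3M a1 a2; ring.
  have br : r3 (f r e2) = 0 by rewrite /r !fBl !fZl !r3B !r3M b1 b2; ring.
  have [c1 hc1] := r3_dvd _ ar; have [c2 hc2] := r3_dvd _ br.
  have hn' : nn e1 e2 r = 3 *: (r - (c2 *: e1 + c1 *: e2)).
    exact: nn_red.
  exists (r - (c2 *: e1 + c1 *: e2)) => //.
  by apply: perp_div3; rewrite -hn'.
pose Dset u := inPerp2 e1 e2 u /\ forall n, inPerp2 e1 e2 n -> (3 %| f u n)%Z.
have Dfun u : Dset u -> forall v,
    r3 (f v u) = r3 (f v e1) * r3 (f v1 u) + r3 (f v e2) * r3 (f v2 u).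
  move=> [hu hu3] v.
  have [n' pn' hn'] := red v.
  have E : f (v - f v e1 *: v1 - f v e2 *: v2) u = f n' u.
    by apply: (@mulfI _ 3) => //; rewrite -!fZl (decomp e1 e2) hn' fDl mm_perp // add0r.
  have : r3 (f n' u) = 0 by apply/eqP; rewrite -r3_eq0 fC; apply: hu3.
  rewrite -E !fBl !fZl !r3B !r3M => h.
  by apply/eqP; rewrite -subr_eq0 -h; apply/eqP; ring.
have uex y : exists u, [/\ inPerp2 e1 e2 u, zeta u = nn e1 e2 y & Dset u].
  have [u hu hzu] := zsurj _ (nnp y).
  exists u; split => //; split => // n hn.
  rewrite -ziso // hzu nn_orth //; last by apply: zN.
  by apply/dvdzP; exists (f y (zeta n)); rewrite mulrC.
have key v y u : inPerp2 e1 e2 u -> zeta u = nn e1 e2 y ->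
    f (zeta (nn e1 e2 v)) y = f v u.
  move=> hu hzu; apply: (@mulfI _ 3) => //.
  rewrite -fZr (decomp e1 e2 y) fDr (fC _ (mm _ _ _)) mm_perp; last by apply: zN.
  by rewrite add0r -hzu ziso // (nn_orth e1 e2 h11 h22 h12).
have [u1 [pu1 zu1 Du1]] := uex v1.
have [u2 [pu2 zu2 Du2]] := uex v2.
have lincl y u : inPerp2 e1 e2 u -> zeta u = nn e1 e2 y -> forall v,
    r3 (f v u) = r3 (f y e1) * r3 (f v u1) + r3 (f y e2) * r3 (f v u2).
  move=> hu hzu v.
  have [n' pn' hn'] := red y.
  have [w pw zw] := zsurj n' pn'.
  have p1 : inPerp2 e1 e2 (u - f y e1 *: u1) by apply: perpB => //; apply: perpZ.
  have E : u - f y e1 *: u1 - f y e2 *: u2 = 3 *: w.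
    apply: zinj; [by apply: perpB => //; apply: perpZ | by apply: perpZ |].
    by rewrite !zB // zu1 zu2 hzu zZ // zw -hn' !nnB !nnZ.
  have Eu : u = 3 *: w + f y e1 *: u1 + f y e2 *: u2.
    by rewrite -E addrAC !subrK.
  by rewrite Eu !fDr !fZr !r3D !r3M r3_3 mul0r add0r.
have cons y z uy uz : inPerp2 e1 e2 uy -> zeta uy = nn e1 e2 y -> Dset uy ->
    inPerp2 e1 e2 uz -> zeta uz = nn e1 e2 z -> Dset uz ->
    r3 (f v2 uz) * r3 (f v1 uy) + r3 (f v1 uz) * r3 (f v2 uy)
    = r3 (f y e1) * r3 (f z e2) + r3 (f z e1) * r3 (f y e2).
  move=> py zy Dy pz zz Dz.
  pose w := - f v2 uz *: v1 - f v1 uz *: v2.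
  have aw : r3 (f w e1) = - r3 (f v2 uz).
    by rewrite /w fBl !fZl r3B !r3M r3N a1 a2; ring.
  have bw : r3 (f w e2) = - r3 (f v1 uz).
    by rewrite /w fBl !fZl r3B !r3M r3N b1 b2; ring.
  have pX : inPerp2 e1 e2 (uz - nn e1 e2 w) by apply: perpB.
  have [u' hu'] : exists u', uz - nn e1 e2 w = 3 *: u'.
    apply: nondeg3 => v; rewrite r3_eq0 fBl nn_f r3B r3B r3_3M r3D !r3M (fC uz) Dfun //.
    by rewrite aw bw (fC e1) (fC e2); apply/eqP; ring.
  have pu' : inPerp2 e1 e2 u' by apply: perp_div3; rewrite -hu'.
  have hAB : f w uy + f uy u' = 3 * f y z - (f y e2 * f e1 z + f y e1 * f e2 z).
    apply: (@mulfI _ 3) => //.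
    have -> : 3 * (f w uy + f uy u') = f uy uz.
      have -> : uz = nn e1 e2 w + 3 *: u' by rewrite -hu' addrC subrK.
      by rewrite fDr fZr (fC uy (nn _ _ _)) nn_orth // mulrDr.
    by rewrite -ziso // zy zz fC nn_orth // fC nn_f.
  have := congr1 r3 hAB.
  rewrite r3D r3B r3_3M r3D !r3M Dfun // aw bw (fC e1) (fC e2).
  have -> : r3 (f uy u') = 0 by apply/eqP; rewrite -r3_eq0; case: Dy => _; apply.
  move/eqP; rewrite -subr_eq0 => /eqP H0.
  apply/eqP; rewrite -subr_eq0; apply/eqP; rewrite -[RHS]oppr0 -H0; ring.
have c11 := cons v1 v1 u1 u1 pu1 zu1 Du1 pu1 zu1 Du1.
have c22 := cons v2 v2 u2 u2 pu2 zu2 Du2 pu2 zu2 Du2.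
have c12 := cons v1 v2 u1 u2 pu1 zu1 Du1 pu2 zu2 Du2.
rewrite a1 b1 mulr0 addr0 in c11.
rewrite a2 b2 mul0r addr0 in c22.
rewrite a1 b1 a2 b2 mulr1 mulr0 addr0 in c12.
have Fz v y : r3 (f (zeta (nn e1 e2 v)) y) =
    r3 (f y e1) * (r3 (f v e1) * r3 (f v1 u1) + r3 (f v e2) * r3 (f v2 u1)) +
    r3 (f y e2) * (r3 (f v e1) * r3 (f v1 u2) + r3 (f v e2) * r3 (f v2 u2)).
  have [u [pu zu Du]] := uex y.
  by rewrite (key v y u pu zu) (lincl y u pu zu v) (Dfun u1 Du1 v) (Dfun u2 Du2 v).
have Fms v y : r3 (f (ms e1 e2 v) y) =
    r3 (f v e1) * r3 (f y e1) + r3 (f v e2) * r3 (f y e2).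
  by rewrite /ms fDl !fZl !r3D !r3M (fC e1) (fC e2).
have Fmm v y : r3 (f (mm e1 e2 v) y) =
    r3 (f v e2) * r3 (f y e1) + r3 (f v e1) * r3 (f y e2).
  by rewrite /mm fDl !fZl !r3D !r3M (fC e1) (fC e2).
have hneg := neg_aut _ _ _ hz.
case: (F3_classify _ _ _ _ c11 c22 c12) => [[hQ [hR [hT hP]]] | [hP [hT [hQ hR]]]].
- case: (F3_cases (r3 (f v1 u1))) => hP1.
  + by move: hP; rewrite hP1 mul0r => /eqP; rewrite eq_sym oner_eq0.
  + right; apply: (extend e1 e2 h11 h22 h12 _ hneg true) => v.
    apply: nondeg3 => y; rewrite r3_eq0 fDl fNl r3D r3N Fms Fz hQ hR hT hP1.
    by apply/eqP; ring.
  + left; apply: (extend e1 e2 h11 h22 h12 _ hz true) => v.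
    apply: nondeg3 => y; rewrite r3_eq0 fDl r3D Fms Fz hQ hR hT hP1.
    by apply/eqP; ring.
- case: (F3_cases (r3 (f v2 u1))) => hR1.
  + by move: hR; rewrite hR1 mul0r => /eqP; rewrite eq_sym oner_eq0.
  + right; apply: (extend e1 e2 h11 h22 h12 _ hneg false) => v.
    apply: nondeg3 => y; rewrite r3_eq0 fDl fNl r3D r3N Fmm Fz hQ hP hT hR1.
    by apply/eqP; ring.
  + left; apply: (extend e1 e2 h11 h22 h12 _ hz false) => v.
    apply: nondeg3 => y; rewrite r3_eq0 fDl r3D Fmm Fz hQ hP hT hR1.
    by apply/eqP; ring.
Qed.

Lemma uniq_ext e1 e2 (hg : good e1 e2) zeta
  (hz : is_lattice_aut (inPerp2 e1 e2) zeta) :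
  extends_fixing (inPerp2 e1 e2) (e1 + e2) zeta ->
  extends_fixing (inPerp2 e1 e2) (e1 + e2) (fun v => - zeta v) -> False.
Proof.
move=> [A [hA hAe hAr]] [B [hB hBe hBr]].
have hg' := hg; case: hg' => h11 h22 h12 hprim.
have [v1 [v2 [a1 b1 _ _]]] := surj12 _ _ hg.
have hz' := hz; case: hz' => _ _ _ _ zsurj.
have hn := neg_aut _ _ _ hz; case: hn => _ _ _ _ nsurj.
have cA := aut_M _ _ hg zeta zsurj A hA hAe hAr.
have cB := aut_M _ _ hg (fun v => - zeta v) nsurj B hB hBe hBr.
have nnp : inPerp2 e1 e2 (nn e1 e2 v1) by apply: nn_perp.
have E : 3 *: (v1 *m A + v1 *m B) = mm e1 e2 v1 *m A + mm e1 e2 v1 *m B.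
  have dA : (3 *: v1) *m A = mm e1 e2 v1 *m A + zeta (nn e1 e2 v1).
    by rewrite (decomp e1 e2 v1) mulmxDl (hAr _ nnp).
  have dB : (3 *: v1) *m B = mm e1 e2 v1 *m B - zeta (nn e1 e2 v1).
    by rewrite (decomp e1 e2 v1) mulmxDl (hBr _ nnp).
  by rewrite scalerDr !scalemxAl dA dB addrACA subrr addr0.
rewrite /mm !mulmxDl -!scalemxAl in E.
move: E; set c := f v1 e2; set d := f v1 e1 => E.
have c0 : r3 c = 0 by [].
have d1 : r3 d = 1 by [].
case: cA => [[A1 A2]|[A1 A2]]; case: cB => [[B1 B2]|[B1 B2]]; rewrite A1 A2 B1 B2 in E.
- have E' : 3 *: (v1 *m A + v1 *m B) = (c + c) *: e1 + (d + d) *: e2.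
    by rewrite E; apply/matrixP => i j; rewrite !mxE; ring.
  have [_] := span_div _ _ hg _ _ _ E'.
  by rewrite r3_eq0 r3D d1.
- have E' : 3 *: (v1 *m A + v1 *m B) = (c + d) *: e1 + (d + c) *: e2.
    by rewrite E; apply/matrixP => i j; rewrite !mxE; ring.
  have [_] := span_div _ _ hg _ _ _ E'.
  by rewrite r3_eq0 r3D d1 c0.
- have E' : 3 *: (v1 *m A + v1 *m B) = (d + c) *: e1 + (c + d) *: e2.
    by rewrite E; apply/matrixP => i j; rewrite !mxE; ring.
  have [_] := span_div _ _ hg _ _ _ E'.
  by rewrite r3_eq0 r3D d1 c0.
- have E' : 3 *: (v1 *m A + v1 *m B) = (d + d) *: e1 + (c + c) *: e2.
    by rewrite E; apply/matrixP => i j; rewrite !mxE; ring.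
  have [] := span_div _ _ hg _ _ _ E'.
  by rewrite r3_eq0 r3D d1.
Qed.

Theorem lemma7p9 (e1 e2 : 'rV[int]_22)
  (h11 : k3form e1 e1 = 0) (h22 : k3form e2 e2 = 0) (h12 : k3form e1 e2 = 3)
  (hprim : forall (k : int) (v : 'rV[int]_22),
      k != 0 -> inSpan2 e1 e2 (k *: v) -> inSpan2 e1 e2 v)
  (zeta : 'rV[int]_22 -> 'rV[int]_22)
  (hzeta : is_lattice_aut (inPerp2 e1 e2) zeta) :
  (extends_fixing (inPerp2 e1 e2) (e1 + e2) zeta
   /\ ~ extends_fixing (inPerp2 e1 e2) (e1 + e2) (fun v => - zeta v))
  \/
  (~ extends_fixing (inPerp2 e1 e2) (e1 + e2) zeta
   /\ extends_fixing (inPerp2 e1 e2) (e1 + e2) (fun v => - zeta v)).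
Proof.
have hg : good e1 e2 by split.
case: (exists_ext _ _ hg zeta hzeta) => h; [left|right]; split=> // h'.
- exact: (uniq_ext _ _ hg zeta hzeta h h').
- exact: (uniq_ext _ _ hg zeta hzeta h' h).
Qed.
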